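(* Let $\mathcal{Z}$ be a $C$-Bourgain-Delbaen-$\mathscr{L}_\infty$ sum of a sequence of Banach spaces $(X_n)_{n=1}^\infty$, with associated maps $i_n:\mathcal{W}_n\to\mathcal{W}$, restrictions $r_n$, and subspaces $\mathcal{Z}_n$. Then: (i) $(\mathcal{Z}_n)_{n=1}^\infty$ is a Schauder decomposition of $\mathcal{Z}$ with associated projections $P_n=i_nr_n|_{\mathcal{Z}}:\mathcal{Z}\to\mathcal{Z}$, $n\in\mathbb{N}$; (ii) for all $n\in\mathbb{N}$, $P_n(\mathcal{Z})=i_n(\mathcal{W}_n)$.
   Context: Let $(X_n)_{n=1}^\infty$ be Banach spaces and $(\Delta_n)_{n=1}^\infty$ disjoint finite sets. Let $\mathcal{W}=\big(\oplus_{n=1}^\infty(X_n\oplus\ell_\infty(\Delta_n))_\infty\big)_\infty$ be the space of sequences $(x_n,y_n)_{n=1}^\infty$ with $(x_n,y_n)\in X_n\times\ell_\infty(\Delta_n)$ and norm $\sup_n\max\{\|x_n\|,\|y_n\|\}<\infty$. For $n\in\mathbb{N}$, $\mathcal{W}_n=\big(\oplus_{k=1}^n(X_k\oplus\ell_\infty(\Delta_k))_\infty\big)_\infty$ is identified with the subspace of $\mathcal{W}$ of sequences vanishing after the $n$-th term, and $(X_n\oplus\ell_\infty(\Delta_n))_\infty$ with the subspace of sequences supported on the $n$-th term; $r_n:\mathcal{W}\to\mathcal{W}_n$ is the restriction to the first $n$ terms, and $\pi_{X_n}:\mathcal{W}\to X_n$ is the canonical quotient map $(x_k,y_k)_k\mapsto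 x_n$. Let $C\geq 1$ and $i_n:\mathcal{W}_n\to\mathcal{W}$ be linear maps with: (a) $\|i_n\|\leq C$ for all $n$; (b) $r_ni_n$ is the identity of $\mathcal{W}_n$; (c) $i_nr_ni_m=i_m$ for all $m\leq n$; (d) $\pi_{X_n}i_m=0$ for all $m<n$. Put $\mathcal{Z}_n=i_n\big((X_n\oplus\ell_\infty(\Delta_n))_\infty\big)$ and $\mathcal{Z}=\overline{\mathrm{span}}\bigcup_n\mathcal{Z}_n$; $\mathcal{Z}$ is called a $C$-Bourgain-Delbaen-$\mathscr{L}_\infty$ sum of $(X_n)$. A Schauder decomposition of a Banach space $Z$ is a sequence of closed subspaces $(Z_n)$ such that each $z\in Z$ uniquely equals $\sum_n z_n$ with $z_n\in Z_n$; its associated projections are $z\mapsto\sum_{k\le n}z_k$. *)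

(* Defs.v *)
From HB Require Import structures.
From mathcomp Require Import all_boot all_order all_algebra.
From mathcomp Require Import all_classical all_reals all_analysis.
Set Implicit Arguments. Unset Strict Implicit. Unset Printing Implicit Defensive.
Import Order.TTheory GRing.Theory Num.Theory.
Local Open Scope ring_scope.

(* Ambient type of sequences (x_n, y_n)_n with x_n in X n and y_n in
   l_infty(Delta_n) = (D n -> R).  The Banach space W is the subset of
   sequences of finite sup-norm (inW below). *)
Section BD.
Variables (R : realType) (X : nat -> completeNormedModType R) (D : nat -> finType).

Definition Wt := forall n : nat, (X n * (D n -> R))%type.

Definition zeroW : Wt := fun n => (0, fun _ => 0).
Definition addW (u v : Wt) : Wt :=
  fun n => ((u n).1 + (v n).1, fun k => (u n).2 k + (v n).2 k).
Definition scaleW (a : R) (u : Wt) : Wt :=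
  fun n => (a *: (u n).1, fun k => a * (u n).2 k).
Definition subW (u v : Wt) : Wt := addW u (scaleW (-1) v).

Definition linfty_norm n (y : D n -> R) : R := \big[Num.max/0]_(k : D n) `|y k|.

Definition blocknorm (u : Wt) n : R := Num.max `|(u n).1| (linfty_norm (u n).2).

(* norm of W (possibly +oo for unbounded sequences) *)
Definition normW (u : Wt) : \bar R :=
  ereal_sup [set (blocknorm u n)%:E | n in [set: nat]].

Definition inW (u : Wt) : Prop := (normW u < +oo)%E.

Definition inWn (n : nat) (u : Wt) : Prop :=
  forall k, (n < k)%N -> (u k).1 = 0 /\ forall d, (u k).2 d = 0.

(* (X_n + l_infty(Delta_n))_infty : sequences supported on the n-th term *)
Definition inBlock (n : nat) (u : Wt) : Prop :=
  forall k, k <> n -> (u k).1 = 0 /\ forall d, (u k).2 d = 0.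

(* restriction r_n to the first n terms (indices 0..n) *)
Definition restr (n : nat) (u : Wt) : Wt :=
  fun k => if (k <= n)%N then u k else zeroW k.

Definition piX (n : nat) (u : Wt) : X n := (u n).1.

Definition psum (f : nat -> Wt) (n : nat) : Wt :=
  foldr (fun k acc => addW (f k) acc) zeroW (iota 0 n.+1).

Definition spanW (S : Wt -> Prop) (v : Wt) : Prop :=
  exists l : seq (R * Wt), (forall p, p \in l -> S p.2) /\
    v = foldr (fun p acc => addW (scaleW p.1 p.2) acc) zeroW l.

Definition closureW (S : Wt -> Prop) (z : Wt) : Prop :=
  inW z /\ forall e : R, 0 < e -> exists s, S s /\ (normW (subW z s) < e%:E)%E.

Definition closedW (S : Wt -> Prop) : Prop := forall z, closureW S z -> S z.

Definition linsubW (S : Wt -> Prop) : Prop :=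
  [/\ S zeroW, forall u v, S u -> S v -> S (addW u v) &
      forall a u, S u -> S (scaleW a u)].

Definition series_eq (zs : nat -> Wt) (z : Wt) : Prop :=
  forall e : R, 0 < e -> exists N, forall n, (N <= n)%N ->
    (normW (subW z (psum zs n)) < e%:E)%E.

Definition schauder_decomposition (Z : Wt -> Prop) (Zs : nat -> Wt -> Prop) : Prop :=
  (forall n, [/\ linsubW (Zs n), closedW (Zs n) & forall z, Zs n z -> Z z]) /\
  (forall z, Z z -> exists! zs : nat -> Wt,
       (forall n, Zs n (zs n)) /\ series_eq zs z).

Definition associated_projections (Z : Wt -> Prop) (Zs : nat -> Wt -> Prop)
  (P : nat -> Wt -> Wt) : Prop :=
  forall z, Z z -> forall zs : nat -> Wt,
    (forall n, Zs n (zs n)) -> series_eq zs z ->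
    forall n, P n z = psum zs n.

(* C-Bourgain-Delbaen-L_infty data: maps i_n : W_n -> W (only their values
   on W_n are relevant) *)
Definition BD_data (C : R) (i : nat -> Wt -> Wt) : Prop :=
  1 <= C /\
  [/\ (forall n a u v, inWn n u -> inWn n v ->
          i n (addW (scaleW a u) v) = addW (scaleW a (i n u)) (i n v)),
      (forall n u, inWn n u -> (normW (i n u) <= C%:E * normW u)%E),
      (forall n u, inWn n u -> restr n (i n u) = u),
      (forall m n u, (m <= n)%N -> inWn m u -> i n (restr n (i m u)) = i m u) &
      (forall m n u, (m < n)%N -> inWn m u -> piX n (i m u) = 0)].

Definition Zn (i : nat -> Wt -> Wt) (n : nat) (z : Wt) : Prop :=
  exists u, inBlock n u /\ z = i n u.

Definition Zsum (i : nat -> Wt -> Wt) : Wt -> Prop :=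
  closureW (spanW (fun z => exists n, Zn i n z)).

End BD.

(* Main.v *)
Require Import Defs.
From HB Require Import structures.
From mathcomp Require Import all_boot all_order all_algebra.
From mathcomp Require Import all_classical all_reals all_analysis.
From mathcomp Require Import lra.
Import Order.TTheory GRing.Theory Num.Theory.
Local Open Scope ring_scope.
Set Implicit Arguments. Unset Strict Implicit. Unset Printing Implicit Defensive.

Section Basics.
Variables (R : realType) (X : nat -> completeNormedModType R) (D : nat -> finType).
Local Notation W := (Wt X D).
Implicit Types (u v s z w : W).

Lemma eqW (u v : W) : (forall n, u n = v n) -> u = v.
Proof. exact: functional_extensionality_dep. Qed.

Lemma addWE (u v : W) n : addW u v n = u n + v n. Proof. by []. Qed.
Lemma scaleWE (a:R) (u : W) n : scaleW a u n = a *: u n. Proof. by []. Qed.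
Lemma zeroWE n : zeroW X D n = 0. Proof. by []. Qed.
Lemma subWE (u v : W) n : subW u v n = u n - v n.
Proof. by rewrite /subW addWE scaleWE scaleN1r. Qed.

Definition nb n (p : (X n * (D n -> R))%type) : R := Num.max `|p.1| (linfty_norm p.2).

Lemma blocknormE (u : W) n : blocknorm u n = nb (u n). Proof. by []. Qed.

Lemma linfty_ge n (y : D n -> R) k : `|y k| <= linfty_norm y.
Proof. exact: le_bigmax. Qed.

Lemma linfty_le n (y : D n -> R) M : 0 <= M -> (forall k, `|y k| <= M) -> linfty_norm y <= M.
Proof. by move=> M0 H; apply: bigmax_le. Qed.

Lemma linfty_ge0 n (y : D n -> R) : 0 <= linfty_norm y.
Proof. by rewrite /linfty_norm; elim/big_rec: _ => // k x _ Hx; rewrite le_max Hx orbT. Qed.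

Lemma nb_ge0 n (p : (X n * (D n -> R))%type) : 0 <= nb p.
Proof. by rewrite /nb le_max normr_ge0. Qed.

Lemma nb_le n (p : (X n * (D n -> R))%type) M :
  `|p.1| <= M -> (forall k, `|p.2 k| <= M) -> nb p <= M.
Proof.
move=> h1 h2; rewrite /nb ge_max h1 /=; apply: linfty_le => //.
exact: le_trans (normr_ge0 _) h1.
Qed.

Lemma nb_ge1 n (p : (X n * (D n -> R))%type) : `|p.1| <= nb p.
Proof. by rewrite /nb le_max lexx. Qed.
Lemma nb_ge2 n (p : (X n * (D n -> R))%type) k : `|p.2 k| <= nb p.
Proof. by rewrite /nb le_max (linfty_ge p.2 k) orbT. Qed.

Lemma nbD n (p q : (X n * (D n -> R))%type) : nb (p + q) <= nb p + nb q.
Proof.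
apply: nb_le => [|k] /=.
  by apply: le_trans (ler_normD _ _) _; apply: lerD; apply: nb_ge1.
by apply: le_trans (ler_normD _ _) _; apply: lerD; apply: nb_ge2.
Qed.

Lemma nbZ n (a : R) (p : (X n * (D n -> R))%type) : nb (a *: p) <= `|a| * nb p.
Proof.
apply: nb_le => [|k] /=.
  by rewrite normrZ; apply: ler_wpM2l => //; apply: nb_ge1.
by rewrite normrM; apply: ler_wpM2l => //; apply: nb_ge2.
Qed.

Lemma nbN n (p : (X n * (D n -> R))%type) : nb (- p) <= nb p.
Proof. by rewrite -scaleN1r; apply: le_trans (nbZ _ _) _; rewrite normrN normr1 mul1r. Qed.

Lemma nb0 n (p : (X n * (D n -> R))%type) : nb p <= 0 -> p = 0.
Proof.
move=> h; case: p h => x y h; congr pair.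
  by apply/eqP; rewrite -normr_le0; apply: le_trans (nb_ge1 (x, y)) h.
apply: funext => k; apply/eqP; rewrite -normr_le0.
exact: le_trans (nb_ge2 (x, y) k) h.
Qed.


Definition Bd (u : W) (M : R) := forall n, blocknorm u n <= M.

Lemma Bd_ge0 u M : Bd u M -> 0 <= M.
Proof. by move=> h; apply: le_trans (h 0%N); apply: nb_ge0. Qed.

Lemma normW_ub (u : W) n : ((blocknorm u n)%:E <= normW u)%E.
Proof. by apply: ereal_sup_ubound; exists n. Qed.

Lemma normW_le (u : W) M : Bd u M -> (normW u <= M%:E)%E.
Proof. by move=> h; apply: ge_ereal_sup => _ [n _ <-]; rewrite lee_fin. Qed.

Lemma normW_ge0 (u : W) : (0 <= normW u)%E.
Proof. by apply: le_trans (normW_ub u 0); rewrite lee_fin; apply: nb_ge0. Qed.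

Lemma normW_ltP (u : W) (e : R) : (normW u < e%:E)%E -> exists M, M < e /\ Bd u M.
Proof.
case E: (normW u) => [r| |] //; last by have := normW_ge0 u; rewrite E.
rewrite lte_fin => h; exists r; split => // n.
by have := normW_ub u n; rewrite E lee_fin.
Qed.

Lemma normW_lt (u : W) M (e : R) : Bd u M -> M < e -> (normW u < e%:E)%E.
Proof. by move=> h he; apply: le_lt_trans (normW_le h) _; rewrite lte_fin. Qed.

Lemma Bd_inW (u : W) M : Bd u M -> inW u.
Proof. by move=> h; apply: le_lt_trans (normW_le h) _; apply: ltey. Qed.

Lemma Bd_add u v M1 M2 : Bd u M1 -> Bd v M2 -> Bd (addW u v) (M1 + M2).
Proof.
move=> h1 h2 n; rewrite blocknormE addWE.
by apply: le_trans (nbD _ _) _; apply: lerD; [apply: h1|apply: h2].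
Qed.

Lemma Bd_scale a u M : Bd u M -> Bd (scaleW a u) (`|a| * M).
Proof.
move=> h n; rewrite blocknormE scaleWE.
by apply: le_trans (nbZ _ _) _; apply: ler_wpM2l => //; apply: h.
Qed.

Lemma Bd_subC u v M : Bd (subW u v) M -> Bd (subW v u) M.
Proof.
move=> h n; rewrite blocknormE subWE -opprB.
by apply: le_trans (nbN _) _; have := h n; rewrite blocknormE subWE.
Qed.

Lemma Bd_mono u M M' : Bd u M -> M <= M' -> Bd u M'.
Proof. by move=> h hM n; apply: le_trans (h n) hM. Qed.

Lemma Bd_zero (u : W) : (forall e, 0 < e -> Bd u e) -> u = zeroW X D.
Proof.
move=> h; apply: eqW => n; rewrite zeroWE; apply: nb0.
have h0 := nb_ge0 (u n).
rewrite leNgt; apply/negP => hp.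
have := h _ (divr_gt0 hp (ltr0Sn R 1%N)) n.
move: hp; rewrite blocknormE; set x := nb (u n) => hp H; lra.
Qed.

Lemma Bd_eq (u v : W) : (forall e, 0 < e -> Bd (subW u v) e) -> u = v.
Proof.
move=> h; have := Bd_zero h => e; apply: eqW => n.
by apply/eqP; rewrite -subr_eq0 -subWE e.
Qed.

Lemma restrE n (u : W) k : restr n u k = if (k <= n)%N then u k else 0.
Proof. by []. Qed.

Lemma Bd_restr n u M : Bd u M -> Bd (restr n u) M.
Proof.
move=> h k; rewrite blocknormE restrE; case: ifP => _; first exact: h.
by apply: le_trans (Bd_ge0 h); apply: nb_le => [|j] /=; rewrite normr0.
Qed.

Lemma restr_lin n a u v : restr n (addW (scaleW a u) v) = addW (scaleW a (restr n u)) (restr n v).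
Proof. by apply: eqW => k; rewrite !(restrE, addWE, scaleWE); case: ifP => //; rewrite scaler0 addr0. Qed.

Lemma restr_restr m n u : (m <= n)%N -> restr m (restr n u) = restr m u.
Proof.
move=> hmn; apply: eqW => k; rewrite !restrE; case: ifP => // hk.
by rewrite (leq_trans hk hmn).
Qed.

Lemma restr_inWn n u : inWn n (restr n u).
Proof. by move=> k hk; rewrite restrE leqNgt hk. Qed.

Lemma inWn_restr n u : inWn n u -> restr n u = u.
Proof.
move=> h; apply: eqW => k; rewrite restrE; case: ifP => // hk.
have := h k; rewrite ltnNge hk => /(_ isT) [h1 h2].
by case: (u k) h1 h2 => x y /= -> h2; congr pair; apply: funext.
Qed.

Lemma inBlock_inWn n u : inBlock n u -> inWn n u.
Proof. by move=> h k hk; apply: h => e; rewrite e ltnn in hk. Qed.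

Lemma inWn_Bd n u : inWn n u -> exists M, Bd u M.
Proof.
move=> h; exists (\sum_(k < n.+1) nb (u k)) => k; rewrite blocknormE.
have s0 : forall j : 'I_n.+1, 0 <= nb (u j) by move=> j; apply: nb_ge0.
case: (leqP k n) => hk.
  pose j : 'I_n.+1 := Ordinal (hk : (k < n.+1)%N).
  by rewrite (bigD1 j) //= lerDl sumr_ge0.
have [h1 h2] := h k hk.
have -> : u k = 0 by case: (u k) h1 h2 => x y /= -> h2; congr pair; apply: funext.
by apply: le_trans (sumr_ge0 _ _); [apply: nb_le => [|j] /=; rewrite normr0 | by []].
Qed.
End Basics.

Section BDsec.
Variables (R : realType) (X : nat -> completeNormedModType R) (D : nat -> finType).
Local Notation W := (Wt X D).
Implicit Types (u v s z w : W).
Variables (C : R) (i : nat -> W -> W).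
Hypothesis HBD : BD_data C i.

Lemma HC : 1 <= C. Proof. by case: HBD. Qed.
Lemma Hlin n a u v : inWn n u -> inWn n v ->
  i n (addW (scaleW a u) v) = addW (scaleW a (i n u)) (i n v).
Proof. by case: HBD => _ []; auto. Qed.
Lemma Hbd n u : inWn n u -> (normW (i n u) <= C%:E * normW u)%E.
Proof. by case: HBD => _ []; auto. Qed.
Lemma Hri n u : inWn n u -> restr n (i n u) = u.
Proof. by case: HBD => _ []; auto. Qed.
Lemma Hiri m n u : (m <= n)%N -> inWn m u -> i n (restr n (i m u)) = i m u.
Proof. by case: HBD => _ []; auto. Qed.

Lemma inWn0 n : inWn n (zeroW X D). Proof. by move=> k _; split. Qed.
Lemma inWn_lin n a u v : inWn n u -> inWn n v -> inWn n (addW (scaleW a u) v).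
Proof.
move=> hu hv k hk; have [u1 u2] := hu k hk; have [v1 v2] := hv k hk.
by rewrite /= u1 v1 scaler0 addr0; split=> // d; rewrite u2 v2 mulr0 addr0.
Qed.

Lemma subW_lin u v : subW u v = addW (scaleW (-1) v) u.
Proof. by apply: eqW => k; rewrite subWE addWE scaleWE scaleN1r addrC. Qed.

Lemma inWn_sub n u v : inWn n u -> inWn n v -> inWn n (subW u v).
Proof. by move=> hu hv; rewrite subW_lin; apply: inWn_lin. Qed.

Lemma i_sub n u v : inWn n u -> inWn n v -> i n (subW u v) = subW (i n u) (i n v).
Proof. by move=> hu hv; rewrite !subW_lin Hlin. Qed.

Lemma subWW u : subW u u = zeroW X D.
Proof. by apply: eqW => k; rewrite subWE subrr. Qed.

Lemma i0 n : i n (zeroW X D) = zeroW X D.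
Proof. by rewrite -{1}(subWW (zeroW X D)) i_sub ?subWW //; apply: inWn0. Qed.

Lemma Bd_i n u M : inWn n u -> Bd u M -> Bd (i n u) (C * M).
Proof.
move=> hu hM k; rewrite -lee_fin; apply: le_trans (normW_ub _ k) _.
apply: le_trans (Hbd hu) _; rewrite EFinM; apply: lee_pmul => //.
  by rewrite lee_fin; apply: le_trans HC.
  exact: normW_ge0.
exact: normW_le.
Qed.

Definition P n z := i n (restr n z).

Lemma P_lin n a u v : P n (addW (scaleW a u) v) = addW (scaleW a (P n u)) (P n v).
Proof. by rewrite /P restr_lin Hlin //; apply: restr_inWn. Qed.

Lemma P_sub n u v : P n (subW u v) = subW (P n u) (P n v).
Proof. by rewrite /P !subW_lin restr_lin Hlin //; apply: restr_inWn. Qed.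

Lemma P0 n : P n (zeroW X D) = zeroW X D.
Proof. by rewrite -{1}(subWW (zeroW X D)) P_sub subWW. Qed.

Lemma Bd_P n z M : Bd z M -> Bd (P n z) (C * M).
Proof. by move=> h; apply: Bd_i; [apply: restr_inWn | apply: Bd_restr]. Qed.

Lemma P_fix m n u : (m <= n)%N -> inWn m u -> P n (i m u) = i m u.
Proof. exact: Hiri. Qed.

Lemma P_kill m k u : (m < k)%N -> inBlock k u -> P m (i k u) = zeroW X D.
Proof.
move=> hmk hu; rewrite /P -(restr_restr _ (ltnW hmk)) Hri; last exact: inBlock_inWn.
suff -> : restr m u = zeroW X D by apply: i0.
apply: eqW => j; rewrite restrE; case: ifP => // hj.
have hjk : j <> k by move=> e; rewrite e leqNgt hmk in hj.
have [h1 h2] := hu j hjk.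
by case: (u j) h1 h2 => x y /= -> h2; congr pair; apply: funext.
Qed.

Lemma foldrE (f : nat -> W) (l : seq nat) k :
  foldr (fun j acc => addW (f j) acc) (zeroW X D) l k = \sum_(j <- l) f j k.
Proof. by elim: l => [|a l IH] /=; rewrite ?big_nil ?big_cons // addWE IH. Qed.

Lemma psumE (f : nat -> W) n k : psum f n k = \sum_(0 <= j < n.+1) f j k.
Proof. by rewrite /psum foldrE. Qed.

Lemma psumS (f : nat -> W) n : psum f n.+1 = addW (psum f n) (f n.+1).
Proof. by apply: eqW => k; rewrite addWE !psumE big_nat_recr. Qed.

Lemma psum0 (f : nat -> W) : psum f 0 = f 0%N.
Proof. by apply: eqW => k; rewrite psumE big_nat1. Qed.

Definition dz z k := if k is k'.+1 then subW (P k z) (P k' z) else P 0 z.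

Lemma psum_dz z n : psum (dz z) n = P n z.
Proof.
elim: n => [|n IH]; first by rewrite psum0.
rewrite psumS IH /=; apply: eqW => k; rewrite addWE subWE.
by rewrite addrC subrK.
Qed.

Lemma dz_Zn z k : Zn i k (dz z k).
Proof.
case: k => [|k] /=.
  exists (restr 0 z); split => // j hj; rewrite restrE.
  by case: j hj => // j _ /=.
exists (subW (restr k.+1 z) (restr k.+1 (P k z))); split.
  move=> j hj; rewrite subWE !restrE; case: ifP => hjk; last by rewrite subrr; split.
  have hjk' : (j <= k)%N by rewrite leq_eqVlt in hjk; case/orP: hjk => // /eqP.
  have : restr k (P k z) j = restr k z j by rewrite /P Hri //; apply: restr_inWn.
  rewrite !restrE hjk' => ->.
  by rewrite subrr; split.
rewrite i_sub; try apply: restr_inWn.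
by rewrite /P Hiri //; apply: restr_inWn.
Qed.

Lemma key_est n z s M : Bd (subW z s) M -> P n s = s -> Bd (subW z (P n z)) ((1 + C) * M).
Proof.
move=> hM hs.
have -> : subW z (P n z) = addW (subW z s) (P n (subW s z)).
  rewrite P_sub hs; apply: eqW => k; rewrite addWE !subWE.
  by rewrite addrA subrK.
rewrite mulrDl mul1r; apply: Bd_add => //.
by apply: Bd_P; apply: Bd_subC.
Qed.

Definition SS := fun z => exists n, Zn i n z.

Lemma span_fix s : spanW SS s -> exists N, forall n, (N <= n)%N -> P n s = s.
Proof.
case=> l [hl ->]; elim: l hl => [|[a w] l IH] hl /=.
  by exists 0%N => n _; apply: P0.
have hl' : forall p, p \in l -> SS p.2 by move=> p hp; apply: hl; rewrite in_cons hp orbT.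
have [N HN] := IH hl'.
move: (hl (a, w) (mem_head _ _)) => /= [m [u [hu ->]]].
exists (maxn N m) => n hn; rewrite P_lin HN; last by apply: leq_trans hn; apply: leq_maxl.
rewrite P_fix //; last exact: inBlock_inWn.
by apply: leq_trans hn; apply: leq_maxr.
Qed.

Lemma span_psum (f : nat -> W) n : (forall k, SS (f k)) -> spanW SS (psum f n).
Proof.
move=> hf; exists (map (fun k => (1, f k)) (iota 0 n.+1)); split.
  by move=> p /mapP [k _ ->]; apply: hf.
rewrite /psum; elim: (iota 0 n.+1) => [|a l IH] //=.
rewrite -IH; congr addW; apply: eqW => k; by rewrite scaleWE scale1r.
Qed.

Lemma Bd0 : Bd (zeroW X D) 0.
Proof. by move=> k; rewrite blocknormE zeroWE; apply: nb_le => [|j] /=; rewrite normr0. Qed.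

Lemma closure_self (S : W -> Prop) z : S z -> inW z -> closureW S z.
Proof.
move=> hS hW; split => // e he; exists z; split => //.
by apply: normW_lt he; rewrite subWW; apply: Bd0.
Qed.

Lemma Zsum_iu n u : inWn n u -> Zsum i (i n u).
Proof.
move=> hu; apply: closure_self.
  rewrite -(P_fix (leqnn n) hu) -psum_dz; apply: span_psum => k.
  by exists k; apply: dz_Zn.
have [M hM] := inWn_Bd hu; exact: Bd_inW (Bd_i hu hM).
Qed.


Lemma addW0 u : addW u (zeroW X D) = u.
Proof. by apply: eqW => k; rewrite addWE zeroWE addr0. Qed.
Lemma scaleW1 u : scaleW 1 u = u.
Proof. by apply: eqW => k; rewrite scaleWE scale1r. Qed.

Lemma P_add n u v : P n (addW u v) = addW (P n u) (P n v).
Proof. by rewrite -{1}(scaleW1 u) P_lin scaleW1. Qed.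

Lemma inBlock0 n : inBlock n (zeroW X D). Proof. by move=> k _; split. Qed.
Lemma inBlock_lin n a u v : inBlock n u -> inBlock n v -> inBlock n (addW (scaleW a u) v).
Proof.
move=> hu hv k hk; have [u1 u2] := hu k hk; have [v1 v2] := hv k hk.
by rewrite /= u1 v1 scaler0 addr0; split=> // d; rewrite u2 v2 mulr0 addr0.
Qed.

Lemma Zn_lin n : linsubW (Zn i n).
Proof.
split.
- by exists (zeroW X D); split; [apply: inBlock0 | rewrite i0].
- move=> _ _ [u1 [h1 ->]] [u2 [h2 ->]]; exists (addW (scaleW 1 u1) u2); split.
    exact: inBlock_lin.
  by rewrite Hlin ?scaleW1 //; apply: inBlock_inWn.
- move=> a _ [u [h ->]]; exists (addW (scaleW a u) (zeroW X D)); split.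
    by apply: inBlock_lin => //; apply: inBlock0.
  by rewrite Hlin ?i0 ?addW0 //; try apply: inBlock_inWn; try apply: inWn0.
Qed.

Lemma C1_gt0 : 0 < 1 + C.
Proof. by have := HC; lra. Qed.

Lemma small_lt M e : M < e / (1 + C) -> (1 + C) * M < e.
Proof. by rewrite ltr_pdivlMr ?C1_gt0 // mulrC. Qed.

Lemma nb_small n (p : (X n * (D n -> R))%type) : (forall e, 0 < e -> nb p <= e) -> p = 0.
Proof.
move=> h; apply: nb0; have h0 := nb_ge0 p.
rewrite leNgt; apply/negP => hp.
have := h _ (divr_gt0 hp (ltr0Sn R 1%N)); lra.
Qed.

Lemma Zn_closed n : closedW (Zn i n).
Proof.
move=> z [hzW hz].
have zP : z = P n z.
  apply: Bd_eq => e he.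
  have [s [[v [hv ->]] hs]] := hz _ (divr_gt0 he C1_gt0).
  have [M [hMe hM]] := normW_ltP hs.
  apply: Bd_mono (key_est hM _) _; first by apply: P_fix => //; apply: inBlock_inWn.
  exact: ltW (small_lt hMe).
exists (restr n z); split => //.
move=> j hj; rewrite restrE; case: ifP => hjn; last by split.
suff -> : z j = 0 by split.
apply: nb_small => e he.
have [s [[v [hv ->]] hs]] := hz _ he.
have [M [hMe hM]] := normW_ltP hs.
have : restr n (i n v) j = v j by rewrite Hri //; apply: inBlock_inWn.
rewrite restrE hjn; have [v1 v2] := hv j hj.
have -> : v j = 0 by case: (v j) v1 v2 => x y /= -> h2; congr pair; apply: funext.
move=> e0; have := hM j; rewrite blocknormE subWE e0 subr0 => h.
exact: le_trans h (ltW hMe).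
Qed.

Lemma Zn_sub n z : Zn i n z -> Zsum i z.
Proof. by move=> [u [hu ->]]; apply: Zsum_iu; apply: inBlock_inWn. Qed.

Lemma series_P z : Zsum i z -> series_eq (dz z) z.
Proof.
move=> [hzW hz] e he.
have [s [hs hzs]] := hz _ (divr_gt0 he C1_gt0).
have [M [hMe hM]] := normW_ltP hzs.
have [N HN] := span_fix hs.
exists N => n hn; rewrite psum_dz.
exact: normW_lt (key_est hM (HN n hn)) (small_lt hMe).
Qed.

Lemma P_psum_le (zs : nat -> W) m k : (forall n, Zn i n (zs n)) -> (k <= m)%N ->
  P m (psum zs k) = psum zs k.
Proof.
move=> hzs; elim: k => [|k IH] hk.
  by rewrite psum0; have [u [hu ->]] := hzs 0%N; apply: P_fix => //; apply: inBlock_inWn.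
rewrite psumS P_add IH ?(ltnW hk) //; congr addW.
by have [u [hu ->]] := hzs k.+1; apply: P_fix => //; apply: inBlock_inWn.
Qed.

Lemma P_psum (zs : nat -> W) m n : (forall n, Zn i n (zs n)) -> (m <= n)%N ->
  P m (psum zs n) = psum zs m.
Proof.
move=> hzs; elim: n => [|n IH] hn.
  by move: hn; rewrite leqn0 => /eqP ->; apply: P_psum_le.
rewrite leq_eqVlt in hn; case/orP: hn => [/eqP <-|hn]; first by apply: P_psum_le.
rewrite psumS P_add IH //.
have [u [hu ->]] := hzs n.+1; rewrite P_kill // addW0 //.
Qed.

Lemma proj_eq z (zs : nat -> W) : (forall n, Zn i n (zs n)) -> series_eq zs z ->
  forall m, P m z = psum zs m.
Proof.
move=> hzs hser m; apply: Bd_eq => e he.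
have C0 : 0 < C by have := HC; lra.
have [N HN] := hser _ (divr_gt0 he C0).
have [M [hMe hM]] := normW_ltP (HN (maxn N m) (leq_maxl _ _)).
have := Bd_P m hM; rewrite P_sub P_psum ?leq_maxr // => h.
apply: Bd_mono h _; apply: ltW; move: hMe; rewrite ltr_pdivlMr // mulrC //.
Qed.

Lemma psum_inj (zs zs' : nat -> W) : (forall m, psum zs m = psum zs' m) -> zs = zs'.
Proof.
move=> h; apply: funext => m; case: m => [|m].
  by have := h 0%N; rewrite !psum0.
have := h m.+1; rewrite !psumS h => e; apply: eqW => k.
have := congr1 (fun w : W => w k) e; rewrite /= !addWE; apply: addrI.
Qed.

End BDsec.

Theorem mainTheorem4 (R : realType) (X : nat -> completeNormedModType R)
  (D : nat -> finType) (C : R) (i : nat -> Wt X D -> Wt X D) :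
  BD_data C i ->
  (schauder_decomposition (Zsum i) (Zn i) /\
   associated_projections (Zsum i) (Zn i) (fun n z => i n (restr n z))) /\
  (forall n (w : Wt X D),
     (exists z, Zsum i z /\ w = i n (restr n z)) <->
     (exists u, inWn n u /\ w = i n u)).
Proof.
move=> H; split; [split; [split|] |].
- move=> n; split; [exact: (Zn_lin H) | exact: (Zn_closed H) | exact: (Zn_sub H)].
- move=> z hz; exists (dz i z); split.
    split; [move=> n; apply: (dz_Zn H) | exact: (series_P H)].
  move=> zs [hzs hser]; apply: psum_inj => m.
  by rewrite psum_dz -(proj_eq H hzs hser).
- move=> z hz zs hzs hser n; exact: (proj_eq H hzs hser).
- move=> n w; split.
    by move=> [z [_ ->]]; exists (restr n z); split => //; apply: restr_inWn.
  move=> [u [hu ->]]; exists (i n u); split; first exact: (Zsum_iu H).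
  by rewrite (Hri H).
Qed.
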